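(* Let $m\ge2$ and let $A(\mathbf z)$, $\mathbf z=(z_1,\dots,z_m)$, be the $(2m+1)\times(2m+1)$ matrix whose rows and columns are indexed, in this order, by $s_0,s_1,\dots,s_m,s_1^{-1},\dots,s_m^{-1}$, with entries: column $s_0$ is zero; row $s_0$ has entry $z_j$ in columns $s_j$ and $s_j^{-1}$ ($1\le j\le m$); row $s_i$ ($1\le i\le m$) has entry $z_j$ in column $s_j$ for all $j$, entry $z_j$ in column $s_j^{-1}$ for $j\ne i$, and $0$ in column $s_i^{-1}$; row $s_i^{-1}$ has entry $z_j$ in column $s_j^{-1}$ for all $j$, entry $z_j$ in column $s_j$ for $j\ne i$, and $0$ in column $s_i$. For $1\le i\le 2m+1$ let $(I-A(\mathbf z):i,1)$ denote the matrix obtained from $I-A(\mathbf z)$ by deleting its $i$-th row and first column. Then $$\sum_{i=1}^{2m+1}(-1)^{i+1}\det\big(I-A(\mathbf z):i,1\big)=(1-z_1^2)\cdots(1-z_m^2).$$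
   Context: $I$ is the $(2m+1)\times(2m+1)$ identity matrix; the identity is between polynomials in $z_1,\dots,z_m$. *)

(* Defs.v *)
From HB Require Import structures.
From mathcomp Require Import all_boot all_order all_algebra.
From mathcomp Require Import mpoly.
Set Implicit Arguments. Unset Strict Implicit. Unset Printing Implicit Defensive.
Import GRing.Theory.
Local Open Scope ring_scope.

(* Index k of 'I_(2m+1) (0-based) encodes the generator:
   k = 0        -> s_0            (None)
   1 <= k <= m  -> s_(k-1+1)      (Some (true,  k-1))   (0-based j = k-1)
   m < k <= 2m  -> s_(k-m)^{-1}   (Some (false, k-m-1)) *)
Definition gen_kind (m k : nat) : option (bool * nat) :=
  if k == 0%N then None
  else if (k <= m)%N then Some (true, (k - 1)%N) else Some (false, (k - m - 1)%N).

(* Entry of A(z) at row r, column c; z is indexed 0..m-1 (z_(j+1) = z j). *)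
Definition A_entry (R : nzRingType) (m : nat) (z : nat -> R) (r c : nat) : R :=
  match gen_kind m c with
  | None => 0
  | Some (bc, j) =>
      match gen_kind m r with
      | None => z j
      | Some (br, i) => if (br == bc) then z j else if i == j then 0 else z j
      end
  end.

Definition Amat (R : nzRingType) (m : nat) (z : nat -> R) : 'M[R]_((2 * m).+1) :=
  \matrix_(r, c) A_entry m z r c.

(* The variables z_1..z_m as elements of the polynomial ring {mpoly R[m]},
   indexed 0..m-1 (and 0 out of range, never used). *)
Definition Zvar (R : nzRingType) (m : nat) (j : nat) : {mpoly R[m]} :=
  if insub j is Some i then 'X_i else 0.

(* Main.v *)
Require Import Defs.
From HB Require Import structures.
From mathcomp Require Import all_boot all_order all_algebra.
From mathcomp Require Import mpoly.
From mathcomp Require Import zify ring.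
Import GRing.Theory.
Local Open Scope ring_scope.

Lemma det_castmx (P : comNzRingType) n1 n2 (e : n1 = n2) (A : 'M[P]_n1) :
  \det (castmx (e, e) A) = \det A.
Proof. by case: n2 / e; rewrite castmx_id. Qed.

Lemma gk0 m : gen_kind m 0 = None. Proof. by []. Qed.
Lemma gkL m i : (i < m)%N -> gen_kind m i.+1 = Some (true, i).
Proof. by move=> h; rewrite /gen_kind /= h subn1. Qed.
Lemma gkR m i : gen_kind m (m + i).+1 = Some (false, i).
Proof.
rewrite /gen_kind /= ltnNge leq_addr /=.
congr (Some (_, _)); lia.
Qed.

Section Main.
Variable (P : comNzRingType) (m : nat) (z : nat -> P).
Local Notation n := (2 * m)%N.
Let A := Amat m z.
Let M : 'M[P]_n.+1 := 1%:M - A.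
Let B : 'M[P]_n.+1 := \matrix_(i, j) if j == ord0 then 1 else M i j.
Let r : 'rV[P]_n.+1 := row ord0 A.
Let D : 'M[P]_n.+1 := B + col ord0 B *m r.

Lemma step1 : \sum_(i < n.+1) (-1) ^+ i * \det (row' i (col' ord0 M)) = \det B.
Proof.
rewrite (expand_det_col B ord0); apply: eq_bigr => i _.
rewrite /cofactor mxE eqxx mul1r addn0; congr (_ * \det (row' _ _)).
by apply/matrixP => a b; rewrite !mxE.
Qed.

Lemma step2 : \det B = \det D.
Proof.
pose T : 'M[P]_n.+1 := 1%:M + delta_mx ord0 (ord0 : 'I_1) *m r.
have -> : D = B *m T by rewrite /D /T mulmxDr mulmx1 mulmxA -colE.
rewrite det_mulmx; suff -> : \det T = 1 by rewrite mulr1.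
rewrite -det_tr det_trig.
  rewrite big1 // => i _.
  rewrite !mxE big_ord1 !mxE eqxx /= ord1 eqxx /=.
  case: (i =P ord0) => [->|/eqP hi]; last first.
    by rewrite mul0r addr0.
  by rewrite /A_entry /= mulr0 addr0.
apply/is_trig_mxP => i j hij; rewrite !mxE big_ord1 !mxE.
have -> : (j == i) = false by apply/negbTE; rewrite neq_ltn hij orbT.
have -> : (j == ord0) = false by apply/negbTE; rewrite -lt0n; apply: leq_ltn_trans hij.
by rewrite mul0r addr0.
Qed.

Lemma Dentry k l : l != ord0 -> D k l = (k == l)%:R - A_entry m z k l + A_entry m z 0 l.
Proof.
move=> /negbTE hl; rewrite /D !mxE big_ord1 !mxE hl eqxx mul1r.
by [].
Qed.

Let E := row' ord0 (col' ord0 D).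

Lemma step3 : \det D = \det E.
Proof.
rewrite (expand_det_row D ord0) big_ord_recl big1 ?addr0.
  rewrite /cofactor /= expr0 mul1r.
  rewrite /D !mxE big_ord1 !mxE eqxx /A_entry /= mulr0 addr0 mul1r.
  done.
move=> j _; rewrite Dentry ?neq_lift //.
by rewrite (negbTE (neq_lift _ _)) sub0r addNr mul0r.
Qed.

Let e : (m + m = n)%N. Proof. by rewrite mul2n addnn. Qed.
Let Z : 'M[P]_m := diag_mx (\row_(j < m) z j).

Lemma Eentry (a b : 'I_n) :
  E a b = (a == b)%:R - A_entry m z a.+1 b.+1 + A_entry m z 0 b.+1.
Proof.
rewrite /E mxE mxE Dentry ?neq_lift //.
Qed.

Lemma step4 : castmx (esym e, esym e) E = block_mx 1%:M Z Z 1%:M.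
Proof.
apply/matrixP => a b; rewrite castmxE /= Eentry /=.
rewrite (inj_eq (@cast_ord_inj _ _ _)).
case: (splitP a) => i ha; [have -> : a = lshift m i by apply: val_inj|
  have -> : a = rshift m i by apply: val_inj];
case: (splitP b) => j hb; (try have -> : b = lshift m j by apply: val_inj);
  (try have -> : b = rshift m j by apply: val_inj).
- rewrite block_mxEul /= /A_entry !gkL //= !mxE (inj_eq (@lshift_inj _ _)).
  by rewrite subrK.
- have -> : (lshift m i == rshift m j) = false.
    by apply/eqP => /(congr1 val) /=; have := ltn_ord i; lia.
  rewrite block_mxEur /= /A_entry gkR gkL //= !mxE.
  case: (i =P j) => [->|/eqP ne]; first by rewrite eqxx subr0 add0r /= mulr1n.
  have ne' : (val i == val j) = false by apply/negbTE; rewrite val_eqE.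
  by rewrite ne' ?(negbTE ne) sub0r addNr /= mulr0n.
- have -> : (rshift m i == lshift m j) = false.
    by apply/eqP => /(congr1 val) /=; have := ltn_ord j; lia.
  rewrite block_mxEdl /= /A_entry gkR gkL //= !mxE.
  case: (i =P j) => [->|/eqP ne]; first by rewrite eqxx subr0 add0r /= mulr1n.
  have ne' : (val i == val j) = false by apply/negbTE; rewrite val_eqE.
  by rewrite ne' ?(negbTE ne) sub0r addNr /= mulr0n.
- rewrite block_mxEdr /= /A_entry !gkR /= !mxE (inj_eq (@rshift_inj _ _)).
  by rewrite subrK.
Qed.

Lemma step5 : \det E = \prod_(j < m) (1 - z j ^+ 2).
Proof.
rewrite -(@det_castmx _ _ _ (esym e)) step4.
have -> : block_mx 1%:M Z Z 1%:M =
   block_mx 1%:M 0 Z 1%:M *m block_mx 1%:M Z 0 (1%:M - Z *m Z).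
  rewrite mulmx_block !mul1mx !mulmx1 ?mul0mx ?mulmx0 ?addr0 ?add0r.
  by rewrite addrC subrK.
rewrite det_mulmx det_lblock det_ublock !det1 !mul1r.
rewrite mulmx_diag -diag_const_mx -raddfB /= det_diag.
by apply: eq_bigr => j _; rewrite !mxE expr2.
Qed.

Lemma mainlemma : \sum_(i < n.+1) (-1) ^+ i * \det (row' i (col' ord0 (1%:M - Amat m z)))
  = \prod_(j < m) (1 - z j ^+ 2).
Proof. by rewrite step1 step2 step3 step5. Qed.
End Main.

Theorem lemma2 (R : comNzRingType) (m : nat) (hm : (2 <= m)%N) :
  \sum_(i < (2 * m).+1)
     (-1) ^+ i * \det (row' i (col' ord0 (1%:M - Amat m (@Zvar R m))))
  = \prod_(j < m) (1 - 'X_j ^+ 2 : {mpoly R[m]}).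
Proof.
rewrite mainlemma; apply: eq_bigr => j _.
by rewrite /Zvar valK.
Qed.
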